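(* Let $T=((\Omega,\mathcal{A}),\{(\Omega,\mathcal{M}_i)\}_{i\in N},\{t_i\}_{i\in N})$ be a type space and let $S\subseteq\Omega$ be a common certainty component such that the players' beliefs in the induced type space $T_S$ are consistent. Then the players' beliefs in $T$ are consistent.
   Context: A field on a set $X$ is a collection of subsets of $X$ containing $X$ and closed under complements and finite intersections. For a field $\mathcal{A}$ on $\Omega$, $\mathrm{pba}(\Omega,\mathcal{A})$ is the set of finitely additive nonnegative $P:\mathcal{A}\to\mathbb{R}$ with $P(\Omega)=1$; $B(\Omega,\mathcal{A})$ the sup-norm closure of the linear span of indicators of sets in $\mathcal{A}$; bounded finitely additive set functions carry the weak* topology (weakest making $\mu\mapsto\int f\,d\mu$ continuous for all $f\in B(\Omega,\mathcal{A})$), $\overline{\,\cdot\,}^\ast$ denotes weak* closure. A type space: $N$ a nonempty set of players, fields $\mathcal{M}_i\subseteq\mathcal{A}$ on a set $\Omega$, $t_i:\Omega\times\mathcal{A}\to[0,1]$ with $t_i(\omega,\cdot)\in\mathrm{pba}(\Omega,\mathcal{A})$, $t_i(\cdot,E)\in B(\Omega,\mathcal{M}_i)$ for $E\in\mathcal{A}$, and $t_i(\omega,E)=1$ whenever $E\in\mathcal{M}_i$, $\omega\in E$. $\Pi_i=\overline{\mathrm{conv}\{t_i(\omega,\cdot):\omega\in\Omega\}}^\ast$ (equivalently the $P\in\mathrm{pba}(\Omega,\mathcal{A})$ with $P(E\cap F)=\int_F t_i(\cdot,E)\,dP$ for all $E\in\mathcal{A},F\in\mathcal{M}_i$). The players'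 beliefs in a type space are consistent if $\bigcap_{i\in I}\Pi_i\ne\emptyset$ for every finite set $I$ of players. A nonempty $S\subseteq\Omega$ is a common certainty component if there is $E\in\mathcal{A}$ with $E\subseteq S$ and $t_i(\omega,E)=1$ for all $\omega\in S$, $i\in N$. The induced type space is $T_S=((S,\mathcal{A}^S),\{(S,\mathcal{M}_i^S)\}_{i\in N},\{t_i^S\}_{i\in N})$ with $\mathcal{A}^S=\{F\cap S:F\in\mathcal{A}\}$, $\mathcal{M}_i^S=\{F\cap S:F\in\mathcal{M}_i\}$, $t_i^S(\omega,F\cap S)=t_i(\omega,F)$ for $\omega\in S$, $F\in\mathcal{A}$. *)

(* Defs.v *)
From Stdlib Require Import ClassicalEpsilon.
From mathcomp Require Import all_boot all_order all_algebra.
From mathcomp Require Import all_classical all_reals.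
Import Order.TTheory GRing.Theory Num.Theory.

Set Implicit Arguments.
Unset Strict Implicit.
Unset Printing Implicit Defensive.

Local Open Scope classical_set_scope.
Local Open Scope ring_scope.

Section TypeSpaces.
Variable R : realType.

Definition is_field {T : Type} (F : set (set T)) : Prop :=
  F setT /\ (forall E, F E -> F (~` E)) /\
  (forall E G, F E -> F G -> F (E `&` G)).

(* pba(T, A): finitely additive, nonnegative, total mass 1 (values off A
   are irrelevant). *)
Definition pba {T : Type} (A : set (set T)) (P : set T -> R) : Prop :=
  (forall E, A E -> 0 <= P E) /\ P setT = 1 /\
  (forall E G, A E -> A G -> E `&` G = set0 -> P (E `|` G) = P E + P G).

Definition simple_eval {T : Type} (s : seq (R * set T)) (w : T) : R :=
  \sum_(p <- s) p.1 * (`[< p.2 w >])%:R.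

Definition simple_on {T : Type} (F : set (set T)) (s : seq (R * set T)) : Prop :=
  List.Forall (fun p => F p.2) s.

Definition simple_integral {T : Type} (mu : set T -> R) (s : seq (R * set T)) : R :=
  \sum_(p <- s) p.1 * mu p.2.

(* B(T, F): sup-norm closure of the span of indicators of sets in F *)
Definition in_B {T : Type} (F : set (set T)) (f : T -> R) : Prop :=
  forall e : R, 0 < e -> exists s, simple_on F s /\
    forall w, `|f w - simple_eval s w| <= e.

Definition is_integral {T : Type} (A : set (set T)) (mu : set T -> R)
    (f : T -> R) (I : R) : Prop :=
  forall e : R, 0 < e -> exists s, simple_on A s /\
    (forall w, `|f w - simple_eval s w| <= e) /\
    `|I - simple_integral mu s| <= e.

(* P lies in the weak* closure of C: every basic weak* neighbourhood of P
   (given by finitely many f in B(T,A) and e > 0) meets C. *)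
Definition weak_closure {T : Type} (A : set (set T)) (C : set (set T -> R))
    (P : set T -> R) : Prop :=
  forall (fs : seq (T -> R)) (e : R), 0 < e ->
    List.Forall (in_B A) fs ->
    exists Q, C Q /\ List.Forall (fun f => exists I J,
      is_integral A P f I /\ is_integral A Q f J /\ `|I - J| < e) fs.

Definition conv_types {T : Type} (ti : T -> set T -> R) : set (set T -> R) :=
  fun Q => exists s : seq (R * T),
    List.Forall (fun p => 0 <= p.1) s /\ \sum_(p <- s) p.1 = 1 /\
    forall E, Q E = \sum_(p <- s) p.1 * ti p.2 E.

Definition Pi {N T : Type} (A : set (set T)) (t : N -> T -> set T -> R)
    (i : N) : set (set T -> R) :=
  fun P => pba A P /\ weak_closure A (conv_types (t i)) P.

Definition type_space {N T : Type} (A : set (set T)) (M : N -> set (set T))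
    (t : N -> T -> set T -> R) : Prop :=
  inhabited N /\ is_field A /\
  forall i, is_field (M i) /\ M i `<=` A /\
    (forall w E, A E -> 0 <= t i w E <= 1) /\
    (forall w, pba A (t i w)) /\
    (forall E, A E -> in_B (M i) (fun w => t i w E)) /\
    (forall E w, M i E -> E w -> t i w E = 1).

Definition consistent {N T : Type} (A : set (set T)) (M : N -> set (set T))
    (t : N -> T -> set T -> R) : Prop :=
  forall I : seq N, exists P, forall i, List.In i I -> Pi A t i P.

Definition common_certainty_component {N T : Type} (A : set (set T))
    (t : N -> T -> set T -> R) (S : set T) : Prop :=
  (exists w, S w) /\
  exists E, A E /\ E `<=` S /\ forall w i, S w -> t i w E = 1.

Definition sub_of {T : Type} (S : set T) := {w : T | S w}.

Definition induced_field {T : Type} (S : set T) (F : set (set T))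
    : set (set (sub_of S)) :=
  fun G => exists H, F H /\ G = (@proj1_sig T S) @^-1` H.

Definition induced_M {N T : Type} (S : set T) (M : N -> set (set T))
    : N -> set (set (sub_of S)) :=
  fun i => @induced_field T S (M i).

(* t_i^S(w, F \cap S) = t_i(w, F), F chosen in A (well defined for a
   common certainty component); arbitrary off A^S *)
Definition induced_t {N T : Type} (A : set (set T)) (t : N -> T -> set T -> R)
    (S : set T) : N -> sub_of S -> set (sub_of S) -> R :=
  fun i w G => t i (proj1_sig w)
    (epsilon (inhabits setT) (fun H => A H /\ G = (@proj1_sig T S) @^-1` H)).

End TypeSpaces.

Arguments induced_field {T} S F.
Arguments induced_M {N T} S M.
Arguments induced_t {R N T} A t S.

(* Main.v *)
From Stdlib Require Import ClassicalEpsilon.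
Require Import Defs.
From mathcomp Require Import all_boot all_order all_algebra.
From mathcomp Require Import all_classical all_reals.
From mathcomp Require Import lra.
Import Order.TTheory GRing.Theory Num.Theory.
Set Implicit Arguments.
Unset Strict Implicit.
Unset Printing Implicit Defensive.
Local Open Scope classical_set_scope.
Local Open Scope ring_scope.

Section Helpers.
Variable R : realType.

Lemma field_set0 {T : Type} (F : set (set T)) : is_field F -> F set0.
Proof. move=> [hT [hC _]]; rewrite -setCT; exact: hC. Qed.

Lemma field_U {T : Type} (F : set (set T)) E G : is_field F -> F E -> F G -> F (E `|` G).
Proof.
move=> [hT [hC hI]] hE hG; rewrite -(setCK (E `|` G)) setCU.
apply: (hC); apply: hI; exact: hC.
Qed.

Lemma pba_set0 {T : Type} (F : set (set T)) (mu : set T -> R) :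
  is_field F -> pba F mu -> mu set0 = 0.
Proof.
move=> hF [_ [_ hA]].
have := hA set0 set0 (field_set0 hF) (field_set0 hF) (setI0 _).
rewrite setU0 => h; lra.
Qed.

Lemma pba_split {T : Type} (F : set (set T)) (mu : set T -> R) Y H :
  is_field F -> pba F mu -> F Y -> F H -> mu Y = mu (Y `&` H) + mu (Y `&` ~` H).
Proof.
move=> hF [_ [_ hA]] hY hH.
have hF' := hF; case: hF' => [_ [hC hI]].
rewrite -hA; [|exact: hI|apply: hI => //; exact: hC|].
  by rewrite -setIUr setUCr setIT.
by apply/seteqP; split => x //= [[_ a] [_ b]].
Qed.

Lemma sum_split_aux {T : Type} (F : set (set T)) (mu : set T -> R) (s : seq (R * set T)) Y H :
  is_field F -> pba F mu -> simple_on F s -> F Y -> F H ->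
  \sum_(p <- s) p.1 * mu (p.2 `&` Y) =
  \sum_(p <- s) p.1 * mu (p.2 `&` (Y `&` H)) + \sum_(p <- s) p.1 * mu (p.2 `&` (Y `&` ~` H)).
Proof.
move=> hF hmu + hY hH; have hF' := hF; case: hF' => [_ [hC hI]].
elim: s => [|[a G] s IH]; first by rewrite !big_nil addr0.
move=> /List.Forall_cons_iff [/= hG hs].
rewrite !big_cons /= IH // (pba_split hF hmu (hI _ _ hG hY) hH) !setIA; lra.
Qed.

Lemma bound_gen {T : Type} (F : set (set T)) (mu : set T -> R) (s : seq (R * set T)) :
  is_field F -> pba F mu -> simple_on F s ->
  forall X c, F X -> (forall w, X w -> simple_eval s w <= c) ->
  \sum_(p <- s) p.1 * mu (p.2 `&` X) <= c * mu X.
Proof.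
move=> hF hmu; have hF' := hF; case: hF' => [_ [hC hI]].
elim: s => [|[a H] s IH] hs X c hX hw.
  rewrite big_nil.
  case: (pselect (exists w, X w)) => [[w Xw]|hn].
    apply: mulr_ge0; last by case: hmu => h _; exact: h.
    by have := hw w Xw; rewrite /simple_eval big_nil.
  have -> : X = set0.
    by apply/seteqP; split => x // Xx; exfalso; apply: hn; exists x.
  by rewrite (pba_set0 hF hmu) mulr0.
move: hs => /List.Forall_cons_iff [/= hH hs].
have h1 := IH hs (X `&` H) (c - a) (hI _ _ hX hH).
have h2 := IH hs (X `&` ~` H) c (hI _ _ hX (hC _ hH)).
have e1 : forall w, (X `&` H) w -> simple_eval s w <= c - a.
  move=> w [Xw Hw]; have := hw w Xw.
  rewrite /simple_eval big_cons /= asboolT // mulr1 => h; lra.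
have e2 : forall w, (X `&` ~` H) w -> simple_eval s w <= c.
  move=> w [Xw Hw]; have := hw w Xw.
  by rewrite /simple_eval big_cons /= asboolF // mulr0 add0r.
have := h1 e1; have := h2 e2.
rewrite big_cons /= (setIC H X) (sum_split_aux hF hmu hs hX hH) (pba_split hF hmu hX hH) mulrBl mulrDr.
lra.
Qed.
Lemma bound_top {T : Type} (F : set (set T)) (mu : set T -> R) (s : seq (R * set T)) c :
  is_field F -> pba F mu -> simple_on F s ->
  (forall w, simple_eval s w <= c) -> simple_integral mu s <= c.
Proof.
move=> hF hmu hs hw; have hF' := hF; case: hF' => [hT _].
have := bound_gen hF hmu hs hT (c:=c) (fun w _ => hw w).
have [_ [-> _]] := hmu; rewrite mulr1 /simple_integral.
by under eq_bigr do rewrite setIT.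
Qed.

Definition negs {T : Type} (s : seq (R * set T)) := map (fun p => (- p.1, p.2)) s.

Lemma simple_on_cat {T : Type} (F : set (set T)) (s1 s2 : seq (R * set T)) :
  simple_on F s1 -> simple_on F s2 -> simple_on F (s1 ++ s2).
Proof.
elim: s1 => [|p s IH] //= /List.Forall_cons_iff [h1 h2] h3.
by constructor => //; exact: IH.
Qed.

Lemma simple_on_negs {T : Type} (F : set (set T)) (s : seq (R * set T)) :
  simple_on F s -> simple_on F (negs s).
Proof.
elim: s => [|p s IH] //= /List.Forall_cons_iff [h1 h2].
by constructor => //; exact: IH.
Qed.

Lemma eval_cat_negs {T : Type} (s1 s2 : seq (R * set T)) w :
  simple_eval (s1 ++ negs s2) w = simple_eval s1 w - simple_eval s2 w.
Proof.
rewrite /simple_eval big_cat /= big_map -sumrN; congr (_ + _).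
by apply: eq_bigr => p _; rewrite mulNr.
Qed.

Lemma int_cat_negs {T : Type} (mu : set T -> R) (s1 s2 : seq (R * set T)) :
  simple_integral mu (s1 ++ negs s2) = simple_integral mu s1 - simple_integral mu s2.
Proof.
rewrite /simple_integral big_cat /= big_map -sumrN; congr (_ + _).
by apply: eq_bigr => p _; rewrite mulNr.
Qed.

Lemma bound_diff {T : Type} (F : set (set T)) (mu : set T -> R) (s1 s2 : seq (R * set T)) c :
  is_field F -> pba F mu -> simple_on F s1 -> simple_on F s2 ->
  (forall w, `|simple_eval s1 w - simple_eval s2 w| <= c) ->
  `|simple_integral mu s1 - simple_integral mu s2| <= c.
Proof.
move=> hF hmu h1 h2 hw.
have a := bound_top (c:=c) hF hmu (simple_on_cat h1 (simple_on_negs h2)).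
have b := bound_top (c:=c) hF hmu (simple_on_cat h2 (simple_on_negs h1)).
rewrite !int_cat_negs in a b.
rewrite ler_norml; apply/andP; split.
  have : simple_integral mu s2 - simple_integral mu s1 <= c.
    apply: b => w; rewrite eval_cat_negs; have := hw w; rewrite distrC.
    by move/(le_trans (ler_norm _)).
  lra.
apply: a => w; rewrite eval_cat_negs; have := hw w.
by move/(le_trans (ler_norm _)).
Qed.

Lemma conv_pba {T : Type} (F : set (set T)) (ti : T -> set T -> R) (Q : set T -> R) :
  (forall w, pba F (ti w)) -> conv_types ti Q -> pba F Q.
Proof.
move=> hp [s [hs [h1 hQ]]]; split; last split.
- move=> X hX; rewrite hQ; elim: s hs {h1 hQ} => [|p s IH]; first by rewrite big_nil.
  move=> /List.Forall_cons_iff [hp1 hs]; rewrite big_cons; apply: addr_ge0; last exact: IH.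
  by apply: mulr_ge0 => //; have [h _] := hp p.2; exact: h.
- rewrite hQ -h1; apply: eq_bigr => p _; have [_ [-> _]] := hp p.2; by rewrite mulr1.
- move=> X Y hX hY hXY; rewrite !hQ -big_split /=; apply: eq_bigr => p _.
  by have [_ [_ ->]] := hp p.2; rewrite // mulrDr.
Qed.

Definition pre {T U : Type} (g : U -> T) (s : seq (R * set T)) :=
  map (fun p => (p.1, g @^-1` p.2)) s.

Lemma eval_pre {T U : Type} (g : U -> T) (s : seq (R * set T)) u :
  simple_eval (pre g s) u = simple_eval s (g u).
Proof. by rewrite /simple_eval big_map. Qed.

Lemma simple_on_pre {T U : Type} (FA : set (set T)) (FS : set (set U)) (g : U -> T)
  (s : seq (R * set T)) :
  (forall H, FA H -> FS (g @^-1` H)) -> simple_on FA s -> simple_on FS (pre g s).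
Proof.
move=> hg; elim: s => [|p s IH]; first by move=> _; constructor.
move=> /List.Forall_cons_iff [h1 h2] /=.
constructor; first exact: (hg _ h1).
exact: IH.
Qed.

Lemma int_pre {T U : Type} (FA : set (set T)) (g : U -> T) (mu : set T -> R) (muS : set U -> R)
  (s : seq (R * set T)) :
  (forall H, FA H -> mu H = muS (g @^-1` H)) -> simple_on FA s ->
  simple_integral mu s = simple_integral muS (pre g s).
Proof.
move=> hg; rewrite /simple_integral big_map.
elim: s => [|p s IH] /=; first by rewrite !big_nil.
move=> /List.Forall_cons_iff [h1 h2]; rewrite !big_cons IH // hg //.
Qed.

Lemma in_B_pre {T U : Type} (FA : set (set T)) (FS : set (set U)) (g : U -> T) (f : T -> R) :
  (forall H, FA H -> FS (g @^-1` H)) -> in_B FA f -> in_B FS (f \o g).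
Proof.
move=> hg hf e e0; have [s [hs hw]] := hf e e0.
exists (pre g s); split; first exact: simple_on_pre hs.
by move=> u; rewrite eval_pre; exact: hw.
Qed.

Lemma transfer {T U : Type} (FA : set (set T)) (FS : set (set U)) (g : U -> T)
  (mu : set T -> R) (muS : set U -> R) f I :
  is_field FS -> pba FS muS ->
  (forall H, FA H -> FS (g @^-1` H)) ->
  (forall H, FA H -> mu H = muS (g @^-1` H)) ->
  in_B FA f -> is_integral FS muS (f \o g) I -> is_integral FA mu f I.
Proof.
move=> hF hmu hg hm hf hI e e0.
have e4 : 0 < e / 4 by apply: divr_gt0.
have [s [hs hw]] := hf _ e4.
have [s' [hs' [hw' hI']]] := hI _ e4.
exists s; split => //; split.
  by move=> w; apply: le_trans (hw w) _; lra.
rewrite (int_pre hm hs).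
have hb : `|simple_integral muS (pre g s) - simple_integral muS s'| <= e / 2.
  apply: bound_diff hF hmu (simple_on_pre hg hs) hs' _ => u.
  rewrite eval_pre.
  have a := hw (g u); have b := hw' u; rewrite /= in b.
  have := ler_normD (simple_eval s (g u) - f (g u)) (f (g u) - simple_eval s' u).
  rewrite distrC in a.
  have -> : simple_eval s (g u) - f (g u) + (f (g u) - simple_eval s' u) =
     simple_eval s (g u) - simple_eval s' u by lra.
  move=> h; apply: le_trans h _; lra.
have := ler_normD (I - simple_integral muS s') (simple_integral muS s' - simple_integral muS (pre g s)).
have -> : I - simple_integral muS s' + (simple_integral muS s' - simple_integral muS (pre g s)) =
   I - simple_integral muS (pre g s) by lra.
rewrite (distrC (simple_integral muS s')) => h; apply: le_trans h _; lra.
Qed.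

End Helpers.

Section TS.
Variables (R : realType) (N Omega : Type) (A : set (set Omega))
  (M : N -> set (set Omega)) (t : N -> Omega -> set Omega -> R) (S E : set Omega).
Hypothesis hts : type_space A M t.
Hypothesis hEA : A E.
Hypothesis hES : E `<=` S.
Hypothesis hEt : forall w i, S w -> t i w E = 1.

Let pr := @proj1_sig Omega S.

Lemma ts_field : is_field A.
Proof. by case: hts => _ []. Qed.

Lemma ts_pba i w : pba A (t i w).
Proof. by case: hts => _ [_ h]; have [_ [_ [_ [h1 _]]]] := h i. Qed.

Lemma ts_le1 i w X : A X -> t i w X <= 1.
Proof. by case: hts => _ [_ h]; have [_ [_ [h1 _]]] := h i => /(h1 w) /andP[]. Qed.

Lemma ts_E i w H : S w -> A H -> t i w H = t i w (H `&` E).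
Proof.
move=> Sw hH; have hF := ts_field; have hF' := hF; case: hF' => [_ [hC hI]].
rewrite (pba_split hF (ts_pba i w) hH hEA).
suff : t i w (H `&` ~` E) = 0 by move=> ->; rewrite addr0.
have [h0 [_ hadd]] := ts_pba i w.
have a := h0 _ (hI _ _ hH (hC _ hEA)).
have b := ts_le1 i w (field_U hF (hI _ _ hH (hC _ hEA)) hEA).
rewrite hadd in b; first last.
- by apply/seteqP; split => x // [[_ a1] b1].
- exact: hEA.
- exact: hI _ _ hH (hC _ hEA).
rewrite hEt // in b.
by apply/eqP; rewrite eq_le a andbT; lra.
Qed.

Lemma ts_eqE H H' : pr @^-1` H = pr @^-1` H' -> H `&` E = H' `&` E.
Proof.
move=> heq; apply/seteqP; split => x [hx Ex]; split => //.
  have := congr1 (fun G => G (exist _ x (hES Ex))) heq => /= <-; exact: hx.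
have := congr1 (fun G => G (exist _ x (hES Ex))) heq => /= ->; exact: hx.
Qed.

Lemma ts_F2 i u H : A H -> induced_t A t S i u (pr @^-1` H) = t i (pr u) H.
Proof.
move=> hH; rewrite /induced_t.
have := epsilon_spec (inhabits (@setT Omega))
  (fun H0 => A H0 /\ pr @^-1` H = pr @^-1` H0) (ex_intro _ H (conj hH erefl)).
set H' := epsilon _ _ => -[hH' heq].
have Su : S (pr u) by exact: (proj2_sig u).
by rewrite (ts_E i Su hH) (ts_E i Su hH') (ts_eqE heq).
Qed.

Lemma ind_field : is_field (induced_field S A).
Proof.
have [hT [hC hI]] := ts_field.
split; [|split].
- by exists setT; split => //; rewrite preimage_setT.
- by move=> G [H [hH ->]]; exists (~` H); split; [exact: hC | rewrite preimage_setC].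
- move=> G1 G2 [H1 [h1 ->]] [H2 [h2 ->]]; exists (H1 `&` H2); split; first exact: hI.
  by rewrite preimage_setI.
Qed.

Lemma ind_pba i u : pba (induced_field S A) (induced_t A t S i u).
Proof.
have hF := ts_field; have [hT [hC hI]] := hF.
have [h0 [h1 hadd]] := ts_pba i (pr u).
have Su : S (pr u) by exact: (proj2_sig u).
split; [|split].
- by move=> G [H [hH ->]]; rewrite ts_F2 //; exact: h0.
- by rewrite -(preimage_setT pr) ts_F2.
- move=> G1 G2 [H1 [hH1 ->]] [H2 [hH2 ->]] hd.
  rewrite -preimage_setU !ts_F2 //; last exact: field_U.
  rewrite (ts_E i Su hH1) (ts_E i Su hH2) (ts_E i Su (field_U hF hH1 hH2)).
  rewrite setIUl hadd //; try (apply: hI => //).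
  apply/seteqP; split => x // [[a Ex] [b _]].
  have := congr1 (fun G => G (exist _ x (hES Ex))) hd => /= <-; by split.
Qed.

End TS.

Lemma Forall_map_in {A B : Type} (P : A -> Prop) (Q : B -> Prop) (g : A -> B) (l : seq A) :
  (forall x, P x -> Q (g x)) -> List.Forall P l -> List.Forall Q (map g l).
Proof.
move=> h; elim: l => [|x l IH] /=; first by constructor.
by move=> /List.Forall_cons_iff [h1 h2]; constructor; [exact: h | exact: IH].
Qed.

Theorem lemma12 (R : realType) (N Omega : Type) (A : set (set Omega))
    (M : N -> set (set Omega)) (t : N -> Omega -> set Omega -> R)
    (S : set Omega) :
  type_space A M t ->
  common_certainty_component A t S ->
  consistent (induced_field S A) (induced_M S M) (induced_t A t S) ->
  consistent A M t.
Proof.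
move=> hts [[w0 Sw0] [E [hEA [hES hEt]]]] hcons I.
have [PS hPS] := hcons I.
set pr := @proj1_sig Omega S.
have hg : forall H, A H -> induced_field S A (pr @^-1` H).
  by move=> H hH; exists H.
have hFS := ind_field S hts.
exists (fun F => PS (pr @^-1` F)) => i iI.
have [[h0 [h1 hadd]] hwc] := hPS i iI.
split.
  split; [|split].
  - by move=> X hX; apply: h0; exact: hg.
  - by rewrite preimage_setT.
  - move=> X Y hX hY hXY; rewrite preimage_setU; apply: hadd; try exact: hg.
    by rewrite -preimage_setI hXY preimage_set0.
move=> fs e e0 hfs.
have hfsS : List.Forall (in_B (induced_field S A)) (map (fun f => f \o pr) fs).
  by apply: Forall_map_in hfs => f; exact: in_B_pre.
have [QS [hQSc hfor]] := hwc _ e e0 hfsS.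
have hQSp : pba (induced_field S A) QS.
  by apply: conv_pba hQSc => u; exact: (ind_pba hts hEA hES hEt).
have [s [hs0 [hs1 hQS]]] := hQSc.
exists (fun F => \sum_(p <- s) p.1 * t i (pr p.2) F); split.
  exists (map (fun p => (p.1, pr p.2)) s); split.
    by apply: Forall_map_in hs0.
  by split; [rewrite big_map | move=> F; rewrite big_map].
have hQ : forall H, A H -> \sum_(p <- s) p.1 * t i (pr p.2) H = QS (pr @^-1` H).
  move=> H hH; rewrite hQS; apply: eq_bigr => p _.
  by rewrite (ts_F2 hts hEA hES hEt).
have hPp : pba (induced_field S A) PS by [].
move: hfs hfor {hfsS}; elim: fs => [|f fs IH] /=; first by constructor.
move=> /List.Forall_cons_iff [hf hfs] /List.Forall_cons_iff [[I1 [J1 [hI [hJ hIJ]]]] hfor].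
constructor; last exact: IH.
exists I1, J1; split; [|split] => //.
  exact: (transfer hFS hPp hg (fun H _ => erefl) hf hI).
exact: (transfer hFS hQSp hg hQ hf hJ).
Qed.
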